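(* Let $n>1$, $\lambda\in(0,1)$, and let $X_1,\ldots,X_n$ be a time-homogeneous Markov chain on $\{0,1\}$ with transition matrix $K=\begin{pmatrix}1-\lambda&\lambda\\ \lambda&1-\lambda\end{pmatrix}$ and $X_1\sim\pi=(1/2,1/2)$. Let $f$ satisfy $|f(x_1,\ldots,x_i,\ldots,x_n)-f(x_1,\ldots,\hat x,\ldots,x_n)|\le 1/n$ for all $x^n,\hat x$ and $1\le i\le n$. Then for every $\alpha>1$ (with $\beta=\alpha/(\alpha-1)$) and $t>0$, $$\mathbb{P}\left(\left|f-\mathcal{P}_{\bigotimes_{i=1}^n X_i}(f)\right|\ge t\right)\le 2^{1/\beta}\exp\left(-\frac{2nt^2}{\beta}+\frac{n-1}{\beta}\ln\left(2\left((1-\lambda)^\alpha+\lambda^\alpha\right)^{\frac{1}{\alpha-1}}\right)\right).$$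
   Context: $\mathcal{P}_{\bigotimes_{i=1}^n X_i}$ is the product of the marginal laws of $X_1,\ldots,X_n$ (here $\pi^{\otimes n}$), and $\mu(g)=\int g\,d\mu$. *)

(* Defs.v *)
From HB Require Import structures.
From mathcomp Require Import all_boot all_order all_algebra.
From mathcomp Require Import all_classical all_reals all_analysis.
Set Implicit Arguments. Unset Strict Implicit. Unset Printing Implicit Defensive.
Import Order.TTheory GRing.Theory Num.Theory.
Local Open Scope ring_scope.

(* Discrete setting: sample space {0,1}^n, encoded as {ffun 'I_n -> bool}
   (false = 0, true = 1). Index i : 'I_n corresponds to X_{i+1}. *)

Section Defs.
Variable R : realType.

Definition Kmat (lam : R) (a b : bool) : R := if a == b then 1 - lam else lam.

Definition pi0 (a : bool) : R := 1 / 2.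

Definition markov_law (n : nat) (lam : R) (x : {ffun 'I_n -> bool}) : R :=
  match n as m return {ffun 'I_m -> bool} -> R with
  | 0 => fun _ => 1
  | m.+1 => fun y => pi0 (y ord0) *
      \prod_(i < m) Kmat lam (y (widen_ord (leqnSn m) i)) (y (lift ord0 i))
  end x.

Definition prod_law (n : nat) (x : {ffun 'I_n -> bool}) : R :=
  \prod_(i < n) pi0 (x i).

Definition expect (n : nat) (mu : {ffun 'I_n -> bool} -> R)
  (g : {ffun 'I_n -> bool} -> R) : R := \sum_x mu x * g x.

Definition prob (n : nat) (mu : {ffun 'I_n -> bool} -> R)
  (A : pred {ffun 'I_n -> bool}) : R := \sum_(x | A x) mu x.

Definition upd (n : nat) (x : {ffun 'I_n -> bool}) (i : 'I_n) (b : bool)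
  : {ffun 'I_n -> bool} := [ffun j => if j == i then b else x j].

End Defs.

(* Main.v *)
Require Import Defs.
From HB Require Import structures.
From mathcomp Require Import all_boot all_order all_algebra.
From mathcomp Require Import all_classical all_reals all_analysis.
From mathcomp Require Import ring lra zify.
Import Order.TTheory GRing.Theory Num.Theory.
Local Open Scope ring_scope.

Module Aux.
Import numFieldNormedType.Exports.
Set Implicit Arguments. Unset Strict Implicit.

Section Cosh.
Variable R : realType.

Lemma fact_double (j : nat) : (2 ^ j * j`! <= (j.*2)`!)%N.
Proof.
elim: j => [//|j IH].
rewrite doubleS !factS expnS.
have H1 : (2 * 2 ^ j * (j.+1 * j`!) = 2 * j.+1 * (2 ^ j * j`!))%N by ring.
rewrite H1; move: IH (fact_gt0 (j.*2)); rewrite -mul2n; nia.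
Qed.

Lemma series_exp_le (x : R) N : 0 <= x -> series (exp_coeff x) N <= expR x.
Proof.
move=> x0; apply: (nondecreasing_cvgn_le _ (is_cvg_series_exp_coeff x)).
apply: nondecreasing_series => n _ _; exact: exp_coeff_ge0.
Qed.

Lemma cosh_le (a : R) : expR a + expR (- a) <= 2 * expR (a ^+ 2 / 2).
Proof.
have -> : expR a + expR (- a) = limn (series (exp_coeff a + exp_coeff (- a)) : nat -> R).
  by rewrite lim_seriesD //; exact: is_cvg_series_exp_coeff.
have E : exp_coeff a + exp_coeff (- a) = (fun k => (a ^+ k + (- a) ^+ k) / k`!%:R).
  by apply/funext => k; rewrite /exp_coeff /= mulrDl.
have cu : cvgn (series (fun k => (a ^+ k + (- a) ^+ k) / k`!%:R)).
  by rewrite -E; apply: is_cvg_seriesD; exact: is_cvg_series_exp_coeff.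
rewrite E.
set u := (fun k => _) in cu *.
have u0 : forall k, 0 <= u k.
  move=> k; rewrite /u divr_ge0 // exprNn -signr_odd.
  case: (boolP (odd k)) => ok; first by rewrite expr1 mulN1r subrr.
  by rewrite expr0 mul1r -mulr2n mulrn_wge0 // exprn_even_ge0.
have sS : forall (v : R^nat) n, series v n.+1 = series v n + v n.
  by move=> v n; rewrite /series /= big_nat_recr.
have useven : forall N, series u (N.*2) <= 2 * series (exp_coeff (a ^+ 2 / 2)) N.
  elim=> [|N IH]; first by rewrite /series /= !big_geq // mulr0.
  rewrite doubleS !sS mulrDr -addrA.
  have -> : u (N.*2).+1 = 0.
    by rewrite /u exprNn -signr_odd /= odd_double /= expr1 mulN1r subrr mul0r.
  rewrite addr0 lerD //.
  have key : (a ^+ (N.*2) + (-a)^+(N.*2)) / (N.*2)`!%:R <= 2 * ((a ^+ 2 / 2) ^+ N / N`!%:R).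
    rewrite exprNn -signr_odd odd_double expr0 mul1r -mul2n exprM expr_div_n.
    have A0 : 0 <= (a ^+ 2) ^+ N by rewrite exprn_ge0 // sqr_ge0.
    rewrite -mulr2n -[X in X / _]mulr_natl -mulrA ler_wpM2l // -mulrA -invfM ler_wpM2l //.
    rewrite lef_pV2 ?posrE ?mulr_gt0 ?exprn_gt0 ?ltr0n ?fact_gt0 //.
    by rewrite -natrX -natrM ler_nat mul2n fact_double.
  exact: key.
apply: limr_le => //; near=> N.
apply: (@le_trans _ _ (series u N.*2)).
  apply: (nondecreasing_series (fun n _ _ => u0 n)).
  by rewrite -addnn leq_addr.
apply: (le_trans (useven N)); rewrite ler_wpM2l // series_exp_le //.
by rewrite divr_ge0 // sqr_ge0.
Unshelve. all: by end_near.
Qed.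
End Cosh.


Section Split.
Variable R : realType.

Definition fcons n (b : bool) (y : {ffun 'I_n -> bool}) : {ffun 'I_n.+1 -> bool} :=
  [ffun i => if unlift ord0 i is Some j then y j else b].
Definition ftail n (x : {ffun 'I_n.+1 -> bool}) : {ffun 'I_n -> bool} :=
  [ffun j => x (lift ord0 j)].

Lemma fcons0 n b (y : {ffun 'I_n -> bool}) : fcons b y ord0 = b.
Proof. by rewrite ffunE unlift_none. Qed.
Lemma fconsS n b (y : {ffun 'I_n -> bool}) j : fcons b y (lift ord0 j) = y j.
Proof. by rewrite ffunE liftK. Qed.
Lemma fcons_eta n (x : {ffun 'I_n.+1 -> bool}) : fcons (x ord0) (ftail x) = x.
Proof.
apply/ffunP => i; rewrite ffunE; case: unliftP => [j ->|->] //.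
by rewrite ffunE.
Qed.

Lemma sum_split n (F : {ffun 'I_n.+1 -> bool} -> R) :
  \sum_x F x = \sum_b \sum_y F (fcons b y).
Proof.
rewrite pair_big /=.
rewrite (reindex (fun p : bool * {ffun 'I_n -> bool} => fcons p.1 p.2)) //.
exists (fun x : {ffun 'I_n.+1 -> bool} => (x ord0, ftail x)) => [[b y] _|x _]; last exact: fcons_eta.
rewrite /= fcons0; congr pair; apply/ffunP => j; by rewrite ffunE fconsS.
Qed.

Lemma upd_fconsS n b (y : {ffun 'I_n -> bool}) i c :
  upd (fcons b y) (lift ord0 i) c = fcons b (upd y i c).
Proof.
apply/ffunP => k; rewrite !ffunE; case: unliftP => [j ->|->].
  by rewrite (inj_eq (@lift_inj _ ord0)) ffunE.
by rewrite (negbTE (neq_lift _ _)).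
Qed.

Lemma upd_fcons0 n (y : {ffun 'I_n -> bool}) :
  fcons false y = upd (fcons true y) ord0 false.
Proof.
apply/ffunP => k; rewrite !ffunE; case: unliftP => [j ->|->].
  by rewrite eq_sym (negbTE (neq_lift _ _)).
by [].
Qed.

Lemma sum_ffun0 (F : {ffun 'I_0 -> bool} -> R) x0 : \sum_x F x = F x0.
Proof.
rewrite (big_pred1 x0) // => x; rewrite /= /in_mem /=.
by apply/esym/eqP/ffunP => -[].
Qed.

End Split.

Section MGF.
Variable R : realType.
Local Notation w n := ((1/2 : R) ^+ n).

Lemma sum_w n : \sum_(y : {ffun 'I_n -> bool}) w n = 1.
Proof.
rewrite sumr_const card_ffun card_bool card_ord -[_ *+ (2 ^ n)]mulr_natr natrX -exprMn.
by rewrite mul1r mulVf // expr1n.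
Qed.

Lemma mgf n (g : {ffun 'I_n -> bool} -> R) c s :
  (forall x i b, `|g x - g (upd x i b)| <= c) ->
  \sum_x w n * expR (s * (g x - \sum_y w n * g y))
    <= expR (n%:R * (s ^+ 2 * c ^+ 2 / 8)).
Proof.
elim: n g => [|n IH] g hg.
  set x0 : {ffun 'I_0 -> bool} := [ffun i => false].
  rewrite !(sum_ffun0 _ x0) expr0 !mul1r subrr mulr0 expR0 mul0r expR0.
  by [].
pose m b := \sum_y w n * g (fcons b y).
have wS : w n.+1 = 2^-1 * w n by rewrite exprS mul1r.
have EgE : \sum_y w n.+1 * g y = (m true + m false) / 2.
  rewrite sum_split big_bool /= /m mulrDl !mulr_suml.
  by congr (_ + _); apply: eq_bigr => y _; rewrite wS; ring.
rewrite EgE sum_split.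
have step : forall b, \sum_y w n.+1 * expR (s * (g (fcons b y) - (m true + m false) / 2))
   <= 2^-1 * expR (s * (m b - (m true + m false) / 2)) * expR (n%:R * (s ^+ 2 * c ^+ 2 / 8)).
  move=> b.
  have hb : forall x i c', `|g (fcons b x) - g (fcons b (upd x i c'))| <= c.
    by move=> x i c'; rewrite -upd_fconsS; exact: hg.
  have := IH (fun y => g (fcons b y)) hb; rewrite -/(m b) => IHb.
  set Eg := (m true + m false) / 2.
  have -> : \sum_y w n.+1 * expR (s * (g (fcons b y) - Eg)) =
     2^-1 * expR (s * (m b - Eg)) * \sum_y w n * expR (s * (g (fcons b y) - m b)).
    rewrite mulr_sumr; apply: eq_bigr => y _.
    have -> : s * (g (fcons b y) - Eg) = s * (g (fcons b y) - m b) + s * (m b - Eg) by ring.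
    by rewrite expRD wS; ring.
  by rewrite ler_wpM2l // mulr_ge0 // expR_ge0.
apply: (le_trans (ler_sum _ (fun b _ => step b))).
rewrite big_bool /=.
set K := s ^+ 2 * c ^+ 2 / 8.
set d := s * (m true - m false) / 2.
have -> : s * (m true - (m true + m false) / 2) = d by rewrite /d; field.
have -> : s * (m false - (m true + m false) / 2) = - d by rewrite /d; field.
have hm : `|m true - m false| <= c.
  rewrite /m -sumrB.
  apply: (le_trans (ler_norm_sum _ _ _)).
  apply: (@le_trans _ _ (\sum_(y : {ffun 'I_n -> bool}) w n * c)).
    apply: ler_sum => y _; rewrite -mulrBr normrM ger0_norm ?exprn_ge0 //.
    by rewrite ler_wpM2l ?exprn_ge0 // upd_fcons0; exact: hg.
  by rewrite -mulr_suml sum_w mul1r.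
have hd : d ^+ 2 / 2 <= K.
  move: hm; rewrite ler_norml => /andP [h1 h2].
  rewrite /d /K.
  have -> : (s * (m true - m false) / 2) ^+ 2 / 2 = s ^+ 2 * (m true - m false) ^+ 2 / 8.
    by field.
  rewrite ler_pM2r // ler_wpM2l ?sqr_ge0 //.
  nra.
have hc := @cosh_le R d.
rewrite -mulrDl -mulrDr.
apply: (@le_trans _ _ (2^-1 * (2 * expR (K)) * expR (n%:R * K))).
  rewrite ler_wpM2r ?expR_ge0 // ler_wpM2l //.
  by apply: (le_trans hc); rewrite ler_wpM2l // ler_expR.
by rewrite mulrA mulVf // mul1r -expRD -nat1r mulrDl mul1r.
Qed.
End MGF.

Section Chain.
Variable R : realType.
Variables p q : R.
Definition hh (a b : bool) : R := if a == b then p else q.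
Definition GG m (x : {ffun 'I_m.+1 -> bool}) : R :=
  \prod_(i < m) hh (x (widen_ord (leqnSn m) i)) (x (lift ord0 i)).

Lemma GG_fcons m b (y : {ffun 'I_m.+1 -> bool}) :
  GG (fcons b y) = hh b (y ord0) * GG y.
Proof.
rewrite /GG big_ord_recl; congr (_ * _).
  have -> : widen_ord (leqnSn m.+1) ord0 = ord0 by apply: val_inj.
  by rewrite fcons0 fconsS.
apply: eq_bigr => i _.
have -> : widen_ord (leqnSn m.+1) (lift ord0 i) = lift ord0 (widen_ord (leqnSn m) i).
  by apply: val_inj.
by rewrite !fconsS.
Qed.

Lemma UU m c : \sum_(y : {ffun 'I_m.+1 -> bool}) hh c (y ord0) * GG y = (p + q) ^+ m.+1.
Proof.
elim: m c => [|m IH] c.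
  rewrite sum_split big_bool /=.
  set y0 : {ffun 'I_0 -> bool} := [ffun i => false].
  rewrite !(sum_ffun0 _ y0) /GG !big_ord0 !fcons0 !mulr1 expr1 /hh.
  by case: c => //=; rewrite addrC.
rewrite sum_split big_bool /=.
under eq_bigr do rewrite GG_fcons fcons0.
under [X in _ + X]eq_bigr do rewrite GG_fcons fcons0.
rewrite -!mulr_sumr !IH -mulrDl [in RHS]exprS; congr (_ * _).
by rewrite /hh; case: c => //=; rewrite addrC.
Qed.

Lemma TT m : \sum_(x : {ffun 'I_m.+1 -> bool}) GG x = 2 * (p + q) ^+ m.
Proof.
case: m => [|m].
  rewrite /GG; under eq_bigr do rewrite big_ord0.
  by rewrite sumr_const card_ffun card_bool card_ord expr0 mulr1.
rewrite sum_split big_bool /=.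
under eq_bigr do rewrite GG_fcons.
under [X in _ + X]eq_bigr do rewrite GG_fcons.
by rewrite !UU mulr2n mulrDl mul1r.
Qed.
End Chain.


Lemma powR_prod (R : realType) k (F : 'I_k -> R) a : (forall i, 0 <= F i) ->
  (\prod_(i < k) F i) `^ a = \prod_(i < k) (F i `^ a).
Proof.
move=> F0.
suff : (\prod_(i < k) F i) `^ a = \prod_(i < k) (F i `^ a) /\ 0 <= \prod_(i < k) F i by case.
apply: (big_rec2 (fun y1 y2 => y1 `^ a = y2 /\ 0 <= y1)).
  by rewrite powR1.
move=> i y1 y2 _ [<- y10]; split; first by rewrite powRM.
exact: mulr_ge0.
Qed.


End Aux.

Import Aux.
Theorem corollary2 (R : realType) (n : nat) (hn : (1 < n)%N) (lam : R)
  (hlam0 : 0 < lam) (hlam1 : lam < 1)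
  (f : {ffun 'I_n -> bool} -> R)
  (hf : forall (x : {ffun 'I_n -> bool}) (i : 'I_n) (b : bool),
      `|f x - f (upd x i b)| <= 1 / n%:R)
  (alpha : R) (halpha : 1 < alpha) (t : R) (ht : 0 < t) :
  let beta := alpha / (alpha - 1) in
  prob (@markov_law R n lam)
    (fun x => t <= `|f x - expect (@prod_law R n) f|)
  <= 2 `^ (1 / beta) *
     expR (- (2 * n%:R * t ^+ 2) / beta
           + (n%:R - 1) / beta *
             ln (2 * ((1 - lam) `^ alpha + lam `^ alpha) `^ (1 / (alpha - 1)))).
Proof.
cbv zeta; set beta := alpha / (alpha - 1).
case: n hn f hf => [//|m] hn f hf.
pose w := ((1/2 : R) ^+ m.+1).
have prodE : forall x, @prod_law R m.+1 x = w.
  by move=> x; rewrite /prod_law /pi0 prodr_const card_ord.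
set Ef := expect (@prod_law R m.+1) f.
have EfE : Ef = \sum_x w * f x by apply: eq_bigr => x _; rewrite prodE.
set A := (fun x => t <= `|f x - Ef|).
set N := m.+1.
set mB := ln 2 - 2 * N%:R * t ^+ 2.
have N0 : 0 < N%:R :> R by rewrite ltr0n.
have hB : \sum_(x | A x) w <= expR mB.
  pose s := 4 * N%:R * t.
  have s0 : 0 < s by rewrite /s !mulr_gt0.
  pose E1 x := expR (s * (f x - \sum_y w * f y)).
  pose E2 x := expR (s * ((- f x) - \sum_y w * (- f y))).
  have w0 : 0 <= w by rewrite exprn_ge0 // divr_ge0.
  have key : forall x, A x -> 1 <= expR (- (s * t)) * (E1 x + E2 x).
    move=> x; rewrite /A /E1 /E2 EfE.
    have -> : \sum_y w * - f y = - \sum_y w * f y.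
      by rewrite -sumrN; apply: eq_bigr => y _; rewrite mulrN.
    set u := f x - _.
    have -> : - f x - - \sum_y w * f y = - u by rewrite /u; ring.
    move=> Hu; rewrite mulrDr -!expRD.
    case: (lerP 0 u) => hu.
      have h1 : 1 <= expR (-(s*t) + s*u).
        rewrite -expR0 ler_expR; move: Hu; rewrite ger0_norm // => Hu; nra.
      by apply: (le_trans h1); rewrite lerDl expR_ge0.
    have h1 : 1 <= expR (-(s*t) + s * - u).
      rewrite -expR0 ler_expR; move: Hu; rewrite ltr0_norm // => Hu; nra.
    by apply: (le_trans h1); rewrite lerDr expR_ge0.
  apply: (@le_trans _ _ (\sum_(x | A x) w * (expR (-(s*t)) * (E1 x + E2 x)))).
    apply: ler_sum => x Ax; rewrite -{1}[w]mulr1 ler_wpM2l //; exact: key.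
  have F0 : forall x, 0 <= w * (expR (-(s*t)) * (E1 x + E2 x)).
    by move=> x; rewrite mulr_ge0 // mulr_ge0 ?expR_ge0 // addr_ge0 // expR_ge0.
  apply: (@le_trans _ _ (\sum_x w * (expR (-(s*t)) * (E1 x + E2 x)))).
    by rewrite [X in _ <= X](bigID A) /= lerDl sumr_ge0.
  have -> : \sum_x w * (expR (-(s*t)) * (E1 x + E2 x)) =
     expR (-(s*t)) * (\sum_x w * E1 x + \sum_x w * E2 x).
    rewrite -big_split mulr_sumr /=; apply: eq_bigr => x _; ring.
  have hf2 : forall x i b, `|- f x - - f (upd x i b)| <= 1 / N%:R.
    by move=> x i b; rewrite -opprD normrN; exact: hf.
  have M1 := mgf s hf.
  have M2 := mgf s hf2.
  apply: (@le_trans _ _ (expR (-(s*t)) * (expR (N%:R * (s ^+ 2 * (1 / N%:R) ^+ 2 / 8)) + expR (N%:R * (s ^+ 2 * (1 / N%:R) ^+ 2 / 8))))).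
    by rewrite ler_wpM2l ?expR_ge0 // lerD.
  set K := expR (N%:R * _).
  rewrite -[K + K]mulr2n -[K *+ 2]mulr_natl mulrCA -expRD /mB [expR (ln 2 - _)]expRD lnK ?posrE //.
  rewrite ler_wpM2l // ler_expR /s le_eqVlt; apply/orP; left; apply/eqP.
  field; lra.
have a0 : 0 < alpha by lra.
have a1 : 0 < alpha - 1 by lra.
have b0 : 0 < beta by rewrite /beta divr_gt0.
have ab : alpha^-1 + beta^-1 = 1 by rewrite /beta; field; lra.
pose pp := (1 - lam) `^ alpha.
pose qq := lam `^ alpha.
have pp0 : 0 < pp by rewrite /pp powR_gt0 // subr_gt0.
have qq0 : 0 < qq by rewrite /qq powR_gt0.
set S := (1 - lam) `^ alpha + lam `^ alpha.
have S0 : 0 < S by rewrite addr_gt0.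
pose mM := m%:R * ((alpha - 1) * ln 2 + ln S).
pose r (x : {ffun 'I_m.+1 -> bool}) :=
  2 ^+ m * \prod_(i < m) Kmat lam (x (widen_ord (leqnSn m) i)) (x (lift ord0 i)).
have K0 : forall a b, 0 <= Kmat lam a b.
  by move=> a b; rewrite /Kmat; case: (a == b); lra.
have r0 : forall x, 0 <= r x.
  by move=> x; rewrite /r mulr_ge0 ?exprn_ge0 // prodr_ge0.
have markovE : forall x, markov_law lam x = w * r x.
  have e : (1/2 : R)^+m * 2^+m = 1 by rewrite -exprMn mul1r mulVf // expr1n.
  by move=> x; rewrite /markov_law /pi0 /w /r exprS -mulrA [(1/2)^+m * _]mulrA e !mul1r.
have w0 : 0 <= w by rewrite exprn_ge0 // divr_ge0.
have hM : \sum_x w * r x `^ alpha = expR mM.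
  have rpow : forall x, r x `^ alpha = (2^+m) `^ alpha * GG pp qq x.
    move=> x; rewrite /r powRM ?exprn_ge0 ?prodr_ge0 // powR_prod //.
    by congr (_ * _); apply: eq_bigr => i _; rewrite /Kmat /hh; case: (_ == _).
  under eq_bigr do rewrite rpow mulrA.
  rewrite -mulr_sumr TT.
  have e1 : w = expR (m.+1%:R * - ln 2).
    by rewrite expRM_natl expRN lnK ?posrE // /w div1r.
  have e2 : (2 ^+ m : R) `^ alpha = expR (m%:R * ln 2 * alpha).
    by rewrite expRM expRM_natl lnK ?posrE.
  have e3 : S ^+ m = expR (m%:R * ln S) by rewrite expRM_natl lnK.
  have -> : pp + qq = S by [].
  have e4 : (2:R) * expR (m%:R * ln S) = expR (ln 2 + m%:R * ln S).
    by rewrite expRD lnK ?posrE.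
  rewrite e1 e2 e3 e4 -!expRD /mM.
  congr expR; rewrite -[m.+1]addn1 natrD; ring.
pose v := (mM - mB) * (alpha - 1) / (alpha * alpha).
pose C1 := expR (- v * alpha) / alpha.
pose C2 := expR (v * beta) / beta.
have C10 : 0 <= C1 by rewrite /C1 divr_ge0 ?expR_ge0 // ltW.
have C20 : 0 <= C2 by rewrite /C2 divr_ge0 ?expR_ge0 // ltW.
have young : forall x, markov_law lam x <= w * (r x `^ alpha * C1 + C2).
  move=> x; rewrite markovE ler_wpM2l //.
  have h := @conjugate_powR R (r x * expR (- v)) (expR v) alpha beta
     (mulr_ge0 (r0 x) (expR_ge0 _)) (expR_ge0 _) a0 b0 ab.
  rewrite -mulrA -expRD addNr expR0 mulr1 in h.
  rewrite powRM ?expR_ge0 // -!expRM in h.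
  by apply: (le_trans h); rewrite /C1 /C2 !mulrA.
rewrite /prob.
apply: (@le_trans _ _ (\sum_(x | A x) (w * r x `^ alpha * C1 + w * C2))).
  by apply: ler_sum => x _; rewrite (le_trans (young x)) // mulrDr mulrA.
rewrite big_split /= -!mulr_suml.
apply: (@le_trans _ _ (expR mM * C1 + expR mB * C2)).
  apply: lerD; apply: ler_wpM2r => //.
  rewrite -hM [X in _ <= X](bigID A) /= lerDl sumr_ge0 // => x _.
  by rewrite mulr_ge0 // powR_ge0.
have e5 : (2:R) `^ (1/beta) = expR (ln 2 * (1/beta)) by rewrite expRM lnK ?posrE.
have e6 : ln (2 * S `^ (1 / (alpha - 1))) = ln 2 + 1 / (alpha - 1) * ln S.
  by rewrite lnM ?posrE ?powR_gt0 // ln_powR.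
have e7 : (N%:R - 1 : R) = m%:R by rewrite /N -addn1 natrD addrK.
rewrite e5 e6 e7 -expRD.
set Z := (ln 2 * _ + _).
have z1 : mM + - v * alpha = Z.
  rewrite /Z /v /mM /mB /beta /N -addn1 natrD; field; lra.
have z2 : mB + v * alpha / (alpha - 1) = Z.
  rewrite /Z /v /mM /mB /beta /N -addn1 natrD; field; lra.
rewrite /C1 /C2 !mulrA -!expRD z1 z2 -mulrDr ab mulr1.
by [].
Qed.
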